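(* In the supersample setting described in the context, let $\ell$ be the zero-one loss and let $\mathcal A$ be an interpolating algorithm. Then \[ \frac{1}{n}\sum_{i=1}^nI(L^+_{i};U_i)\leq H\!\left(\frac{L_\mu}{2}\right). \]
   Context: Let $\mathcal Z=\mathcal X\times\mathcal Y$ and let $\mu$ be a distribution on $\mathcal Z$. A (possibly randomized) learning algorithm $\mathcal A$ maps a training sample in $\mathcal Z^n$ to a hypothesis $W\in\mathcal W$; each $w$ defines a predictor $f_w:\mathcal X\to\mathcal Y$, and the zero-one loss is $\ell(w,(x,y))=\mathbb 1\{f_w(x)\neq y\}$. For $S\sim\mu^n$ and $W\sim P_{W|S}$, $L_\mu=\mathbb E_W\mathbb E_{Z'\sim\mu}[\ell(W,Z')]$ with $Z'$ independent of $(S,W)$. Supersample: $\widetilde Z=(\widetilde Z_{i,j})_{i\in\{1,\dots,n\},j\in\{0,1\}}$ with i.i.d. entries of law $\mu$; $U=(U_1,\dots,U_n)$ uniform on $\{0,1\}^n$, independent of $\widetilde Z$; $W=\mathcal A(\widetilde Z_U)$ with $\widetilde Z_U=(\widetilde Z_{1,U_1},\dots,\widetilde Z_{n,U_n})$; $L_i^+=\ell(W,\widetilde Z_{i,0})$. The algorithm is interpolating if $\ell(W,\widetilde Z_{i,U_i})=0$ almost surely for every $i$. $H(p)=-p\ln p-(1-p)\ln(1-p)$ is the binary entropy function and mutual information is in nats. *)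

(* Defs.v *)
From HB Require Import structures.
From mathcomp Require Import all_boot all_order all_algebra.
From mathcomp Require Import all_classical all_reals all_analysis.
Set Implicit Arguments.
Unset Strict Implicit.
Unset Printing Implicit Defensive.
Import Order.TTheory GRing.Theory Num.Theory.
Local Open Scope classical_set_scope.
Local Open Scope ring_scope.

Definition loss01 (X Wt : Type) (Y : eqType) (f : Wt -> X -> Y) (w : Wt)
  (z : X * Y) : bool := f w z.1 != z.2.

(* the product sigma-algebra on ('I_n -> Z) * Xi is generated by the
   measurable cylinders {p | p.1 i \in B} and {p | p.2 \in D} *)
Definition sample_seed_cylinders (n : nat) (dZ dXi : measure_display)
  (Z : measurableType dZ) (Xi : measurableType dXi)
  : set (set (('I_n -> Z) * Xi)) :=
  [set E | exists i B, measurable B /\ E = [set p | B (p.1 i)]] `|`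
  [set E | exists D, measurable D /\ E = [set p | D p.2]].

Definition algo_measurable (n : nat) (dZ dXi dW : measure_display)
  (Z : measurableType dZ) (Xi : measurableType dXi) (Wt : measurableType dW)
  (A : ('I_n -> Z) -> Xi -> Wt) : Prop :=
  forall S : set Wt, measurable S ->
    <<s @sample_seed_cylinders n _ _ Z Xi >> [set p | S (A p.1 p.2)].

Section InfoDefs.
Variable R : realType.

Definition xlnx (x : R) : R := if x == 0 then 0 else x * ln x.

Definition binary_entropy (p : R) : R := - xlnx p - xlnx (1 - p).

Definition mutual_info_bool (d : measure_display) (Omega : measurableType d)
  (P : probability Omega R) (L V : Omega -> bool) : R :=
  \sum_(a : bool) \sum_(b : bool)
    (let pab := fine (P [set w | L w = a /\ V w = b]) in
     let pa := fine (P [set w | L w = a]) in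
     let pb := fine (P [set w | V w = b]) in
     if pab == 0 then 0 else pab * ln (pab / (pa * pb))).

(* uniform distribution on {0,1} (encoded as bool, false = 0, true = 1) *)
Definition unif_bool (B : set bool) : \bar R :=
  ((2^-1)%:E * (\d_false B + \d_true B))%E.

End InfoDefs.

(* Main.v *)
Require Import Defs.
From HB Require Import structures.
From mathcomp Require Import all_boot all_order all_algebra.
From mathcomp Require Import all_classical all_reals all_analysis.
From mathcomp Require Import ring lra.
Set Implicit Arguments.
Unset Strict Implicit.
Unset Printing Implicit Defensive.
Import Order.TTheory GRing.Theory Num.Theory.
Local Open Scope classical_set_scope.
Local Open Scope ring_scope.

Section RealPart.
Variable R : realType.

Lemma mi_table_bound (q : R) (p : bool -> bool -> R) (pa pb : bool -> R) :
  0 <= q <= 2^-1 ->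
  p true true = q -> p true false = 0 -> p false true = 2^-1 - q ->
  p false false = 2^-1 -> pa true = q -> pa false = 1 - q ->
  pb true = 2^-1 -> pb false = 2^-1 ->
  \sum_(a : bool) \sum_(b : bool)
    (if p a b == 0 then 0 else p a b * ln (p a b / (pa a * pb b)))
  <= binary_entropy q.
Proof.
move=> /andP[q0 qh] ptt ptf pft pff pat paf pbt pbf.
rewrite !big_bool /= ptt ptf pft pff pat paf pbt pbf eqxx.
have h0 : (2^-1 : R) != 0 by rewrite invr_eq0 pnatr_eq0.
have -> : (2^-1 == 0 :> R) = false by apply/eqP; lra.
have q1 : 0 < 1 - q by lra.
have eFF : 2^-1 / ((1 - q) / 2) = (1 - q)^-1 :> R.
  by field; apply/eqP; lra.
rewrite eFF lnV ?posrE //.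
rewrite /binary_entropy /xlnx.
have -> : (1 - q == 0) = false by apply/eqP; lra.
have hFT : (if 2^-1 - q == 0 then 0 else (2^-1 - q) * ln ((2^-1 - q) / ((1 - q) / 2))) <= 0 :> R.
  case: eqP => // hne.
  have hpos : 0 < 2^-1 - q :> R by lra.
  apply: mulr_ge0_le0; first lra.
  apply: ln_le0.
  rewrite ler_pdivrMr; last by lra.
  lra.
move: hFT; case: (eqVneq q 0) => [->|qn0] hFT.
  rewrite !subr0 ln1 in hFT *. have -> : (2^-1 / (1/2) : R) = 1 by field. rewrite ln1 mulr0; case: ifP => _; lra.

have qp : 0 < q by rewrite lt_def qn0 q0.
have e2 : q / (q / 2) = 2 :> R by field; rewrite qn0.
rewrite e2.
have l2q : ln 2 + ln q <= 0 :> R.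
  rewrite -lnM ?posrE //; apply: ln_le0; lra.
have l1q : ln (1 - q) <= 0 :> R by apply: ln_le0; lra.
have : 0 <= (2^-1 - q) * - ln (1 - q) :> R by apply: mulr_ge0; lra.
have : q * (ln 2 + ln q) <= 0 by apply: mulr_ge0_le0; lra.
move: hFT; set F := (if _ then _ else _); move=> hFT; lra.
Qed.
End RealPart.
Section Main.
Variables (R : realType) (dO : measure_display) (Omega : measurableType dO) (P : probability Omega R)
  (dX dY dW dXi : measure_display)
  (X : measurableType dX) (Y : measurableType dY)
  (Wt : measurableType dW) (Xi : measurableType dXi)
  (mu : probability (X * Y)%type R)
  (f : Wt -> X -> Y).
Variable (hloss : measurable [set p : (Wt * (X * Y))%type | loss01 f p.1 p.2]).
Variables (n : nat) (A : ('I_n -> (X * Y)%type) -> Xi -> Wt).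
Variable (hA : algo_measurable A).
Variables  (Zt : 'I_n -> bool -> {RV P >-> (X * Y)%type})
  (U : 'I_n -> {RV P >-> bool})
  (xi : {RV P >-> Xi})
  (W : {RV P >-> Wt}).
Variable  (hlaw : forall (B : 'I_n -> bool -> set (X * Y)%type) (C : 'I_n -> set bool)
            (D : set Xi),
      (forall i j, measurable (B i j)) -> (forall i, measurable (C i)) ->
      measurable D ->
      P [set w | (forall i j, B i j (Zt i j w)) /\ (forall i, C i (U i w))
                 /\ D (xi w)]
      = ((\prod_(i < n) \prod_(j : bool) mu (B i j))
         * (\prod_(i < n) unif_bool R (C i)) * P (xi @^-1` D))%E).
Variable (hW : forall w, W w = A (fun i => Zt i (U i w) w) (xi w)).
Variable (hinterp : forall i : 'I_n,
      P [set w | loss01 f (W w) (Zt i (U i w) w)] = 0%E).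

Let Z := (X * Y)%type.
Let S := ((('I_n -> Z) * Xi) * Z)%type.

Definition G : set (set S) := [set E | exists (B : 'I_n -> set Z) (D : set Xi) (B' : set Z),
  (forall k, measurable (B k)) /\ measurable D /\ measurable B' /\
  E = [set p | (forall k, B k (p.1.1 k)) /\ D p.1.2 /\ B' p.2]].

Definition V (w : Omega) : ('I_n -> Z) * Xi := (fun k => Zt k (U k w) w, xi w).

Variable i : 'I_n.
Definition pre1 (E : set S) : set Omega := [set w | E (V w, Zt i false w)].
Definition pre2 (E : set S) : set (Omega * Z) := [set wz | E (V wz.1, wz.2)].
Definition Ui : set Omega := [set w | U i w = true].

Definition Dyn : set (set S) := [set E | measurable (pre1 E) /\ measurable (pre2 E) /\
  P (pre1 E `&` Ui) = ((2^-1)%:E * (P \x mu)%E (pre2 E))%E].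


Lemma mpre d' (T' : measurableType d') (Xv : {RV P >-> T'}) (B : set T') :
  measurable B -> measurable [set w | B (Xv w)].
Proof. by move=> mB; exact: (measurable_funPTI Xv mB). Qed.

Lemma mU k b : measurable [set w | U k w = b].
Proof. exact: (@mpre _ _ (U k) [set b]). Qed.

Lemma mforall (Q : 'I_n -> set Omega) : (forall k, measurable (Q k)) ->
  measurable [set w | forall k, Q k w].
Proof.
move=> mQ.
have -> : [set w | forall k, Q k w] = \bigcap_(k in setT) Q k.
  by apply/seteqP; split=> w /= h k //; apply: h.
by apply: fin_bigcap_measurable => //; exact: finite_finset.
Qed.

Lemma mS (B : 'I_n -> set Z) : (forall k, measurable (B k)) ->
  measurable [set w | forall k, B k (Zt k (U k w) w)].
Proof.
move=> mB.
have -> : [set w | forall k, B k (Zt k (U k w) w)] = [set w | forall k,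
   ([set w | U k w = false] `&` [set w | B k (Zt k false w)] `|`
    [set w | U k w = true] `&` [set w | B k (Zt k true w)]) w].
  apply/seteqP; split=> w /= h k; have := h k; case: (U k w) => /=.
  - by move=> ?; right.
  - by move=> ?; left.
  - by case=> -[].
  - by case=> -[].
apply: mforall => k; apply: measurableU; apply: measurableI;
  (exact: mU || exact: mpre).
Qed.

Definition Ev (u : {ffun 'I_n -> bool}) := [set w | forall k, U k w = u k].

Lemma mEv u : measurable (Ev u).
Proof. by apply: mforall => k; exact: mU. Qed.

Lemma part_sum (E : set Omega) : measurable E ->
  P E = (\sum_(u : {ffun 'I_n -> bool}) P (E `&` Ev u))%E.
Proof.
move=> mE.
pose g w : {ffun 'I_n -> bool} := [ffun k => U k w].
have gE u w : Ev u w <-> g w = u.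
  split=> [h|<- k]; last by rewrite ffunE.
  by apply/ffunP => k; rewrite ffunE h.
have H : forall s : seq {ffun 'I_n -> bool}, uniq s ->
  measurable (E `&` [set w | g w \in s]) /\
  P (E `&` [set w | g w \in s]) = (\sum_(u <- s) P (E `&` Ev u))%E.
  elim=> [|a s IH] /=.
    move=> _; rewrite big_nil.
    have -> : E `&` [set w | g w \in [::]] = set0.
      by apply/seteqP; split=> w //= [].
    by split => //; rewrite measure0.
  move=> /andP[an us]; have [m1 e1] := IH us.
  have -> : E `&` [set w | g w \in a :: s] =
      (E `&` Ev a) `|` (E `&` [set w | g w \in s]).
    apply/seteqP; split=> w /=.
      case=> Ew; rewrite in_cons => /orP[/eqP ga|gs]; [left|right] => //.
      by split => //; apply/gE.
    case=> -[Ew h]; split => //; rewrite in_cons.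
      by move/gE: h => ->; rewrite eqxx.
    by rewrite h orbT.
  have mEa : measurable (E `&` Ev a) by apply: measurableI => //; exact: mEv.
  split; first exact: measurableU.
  rewrite measureU //; last first.
    apply/seteqP; split=> w //= -[[_ /gE ga] [_ gs]].
    by move: an; rewrite -ga gs.
  by rewrite big_cons -e1.
have [_ e] := H _ (index_enum_uniq _).
rewrite -e; congr (P _); apply/seteqP; split=> w /=.
  by move=> Ew; split => //; rewrite mem_index_enum.
by case.
Qed.


Lemma unif1 b : unif_bool R [set b] = (2^-1)%:E.
Proof.
rewrite /unif_bool !diracE.
have t1 : forall b : bool, (b \in [set b]) = true by move=> b'; apply/mem_set.
have t2 : forall b : bool, (~~ b \in [set b]) = false.
  by move=> b'; apply/negbTE/negP => /set_mem /=; case: b'.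
rewrite -EFinD -EFinM; congr EFin.
case: b; rewrite ?t1 ?t2 /=; [move: (t2 true) | move: (t2 false)] => /= ->; rewrite /= ?mulr0n ?add0r ?addr0 ?mulr1 //.
Qed.

Lemma count_half (x : R) :
  (\sum_(u : {ffun 'I_n -> bool}) (if u i then x%:E else 0))%E =
  ((2^-1)%:E * \sum_(u : {ffun 'I_n -> bool}) x%:E)%E.
Proof.
rewrite (eq_bigr (fun u : {ffun 'I_n -> bool} => (if u i then x else 0)%:E)); last by move=> u _; case: ifP.
rewrite !sumEFin -EFinM; congr EFin.
pose t (u : {ffun 'I_n -> bool}) : {ffun 'I_n -> bool} :=
  [ffun k => if k == i then ~~ u k else u k].
have tK : involutive t.
  move=> u; apply/ffunP => k; rewrite /t !ffunE; case: eqP => // ->.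
  by rewrite negbK.
have e1 : \sum_(u : {ffun 'I_n -> bool}) (if u i then x else 0) =
          \sum_(u : {ffun 'I_n -> bool}) (if ~~ u i then x else 0).
  rewrite (reindex_inj (inv_inj tK)); apply: eq_bigr => u _.
  by rewrite /t ffunE eqxx.
have e2 : \sum_(u : {ffun 'I_n -> bool}) (if u i then x else 0) +
          \sum_(u : {ffun 'I_n -> bool}) (if ~~ u i then x else 0) =
          \sum_(u : {ffun 'I_n -> bool}) x.
  by rewrite -big_split; apply: eq_bigr => u _; case: (u i) => /=; rewrite ?addr0 ?add0r.
have key : forall s : R, s = 2^-1 * (s + s) by move=> s; field.
rewrite -e2 -e1; exact: key.
Qed.


Lemma mbool (C : set bool) : measurable C.
Proof. by []. Qed.

Lemma base : G `<=` Dyn.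
Proof.
move=> _ [B [D [B' [mB [mD [mB' ->]]]]]].
set Sr := [set w | (forall k, B k (Zt k (U k w) w)) /\ D (xi w)].
have mSr : measurable Sr.
  by apply: (@measurableI _ _ [set w | forall k, B k (Zt k (U k w) w)] [set w | D (xi w)]);
    [exact: mS | exact: mpre].
set E := [set p : S | (forall k, B k (p.1.1 k)) /\ D p.1.2 /\ B' p.2].
have e1 : pre1 E = Sr `&` [set w | B' (Zt i false w)].
  by apply/seteqP; split=> w /=; [move=> [h1 [h2 h3]] | move=> [[h1 h2] h3]].
have e2 : pre2 E = Sr `*` B'.
  by apply/seteqP; split=> -[w z]; rewrite /pre2 /Sr /=; [move=> [h1 [h2 h3]] | move=> [[h1 h2] h3]].
have m1 : measurable (pre1 E) by rewrite e1; apply: measurableI => //; exact: mpre.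
split => //; split; first by rewrite e2; exact: measurableX.
pose cr := (\prod_(k < n) fine (mu (B k))) * (\prod_(k < n) (2^-1 : R)) *
           fine (P (xi @^-1` D)).
have fP (F : set Omega) : measurable F -> P F = (fine (P F))%:E.
  by move=> mF; rewrite fineK // fin_num_measure.
have fmu (F : set Z) : measurable F -> mu F = (fine (mu F))%:E.
  by move=> mF; rewrite fineK // fin_num_measure.
have T2 u : P (Sr `&` Ev u) = cr%:E.
  pose Bg k j := if j == u k then B k else setT.
  have -> : Sr `&` Ev u = [set w | (forall k j, Bg k j (Zt k j w)) /\
      (forall k, [set u k] (U k w)) /\ D (xi w)].
    apply/seteqP; split=> w /=.
      move=> [[hB hD] hE]; split; last by split.
      move=> k j; rewrite /Bg; case: eqP => // ->; rewrite -(hE k); exact: hB.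
    move=> [hB [hC hD]]; split => //; split => // k.
    by have := hB k (u k); rewrite /Bg eqxx -(hC k).
  rewrite (@hlaw Bg (fun k => [set u k]) D) //; last by move=> k j; rewrite /Bg; case: ifP.
  rewrite (eq_bigr (fun k => (fine (mu (B k)))%:E)); last first.
    move=> k _; rewrite big_bool /Bg /=; case: (u k) => /=;
    by rewrite probability_setT ?mule1 ?mul1e (fmu _ (mB k)).
  rewrite (eq_bigr (fun k => (2^-1 : R)%:E) (fun k _ => unif1 (u k))).
  by rewrite (fP _ (measurable_funPTI xi mD)) !prodEFin -!EFinM.
have T1 u : P (pre1 E `&` Ui `&` Ev u) = if u i then (cr * fine (mu B'))%:E else 0%E.
  case: ifP => ui; last first.
    rewrite (_ : _ `&` _ = set0) ?measure0 //.
    apply/seteqP; split=> w //= [[_ h1] h2].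
    by move: ui; rewrite -h2 h1.
  pose Bf k j := (if j == u k then B k else setT) `&`
                 (if (k == i) && ~~ j then B' else setT).
  have -> : pre1 E `&` Ui `&` Ev u = [set w | (forall k j, Bf k j (Zt k j w)) /\
      (forall k, [set u k] (U k w)) /\ D (xi w)].
    apply/seteqP; split=> w /=.
      move=> [[[hB [hD hB']] hU] hE]; split; last by split.
      move=> k j; rewrite /Bf; split.
        case: eqP => // ->; rewrite -(hE k); exact: hB.
      by case: eqP => //= -> ; case: j.
    move=> [hB [hC hD]]; split; last by [].
    split; last by rewrite /Ui /= hC.
    split; last split => //.
      by move=> k; have := hB k (u k); rewrite /Bf eqxx -(hC k) => -[].
    by have := hB i false; rewrite /Bf eqxx /= => -[].
  rewrite (@hlaw Bf (fun k => [set u k]) D) //; last first.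
    by move=> k j; rewrite /Bf; apply: measurableI; case: ifP.
  rewrite (eq_bigr (fun k => (fine (mu (B k)) * (if k == i then fine (mu B') else 1))%:E)); last first.
    move=> k _; rewrite big_bool /Bf /=.
    case: (eqVneq k i) => [->|kni] /=; rewrite ?ui /= ?setTI ?setIT.
      by rewrite EFinM -(fmu _ mB') -(fmu _ (mB i)).
    case uk: (u k) => /=; rewrite ?setTI ?setIT probability_setT ?mule1 ?mul1e mulr1;
    by rewrite -(fmu _ (mB k)).
  rewrite (eq_bigr (fun k => (2^-1 : R)%:E) (fun k _ => unif1 (u k))).
  rewrite (fP _ (measurable_funPTI xi mD)) !prodEFin -!EFinM; congr EFin.
  rewrite big_split /= -big_mkcond big_pred1_eq /cr.
  ring.
have mUi : measurable Ui by exact: mU.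
rewrite e2 product_measure1E //.
change (P (pre1 E `&` Ui) = ((2^-1)%:E * (P Sr * mu B'))%E).
have -> : P Sr = (\sum_(u : {ffun 'I_n -> bool}) cr%:E)%E.
  by rewrite (part_sum mSr); apply: eq_bigr => u _; exact: T2.
have -> : P (pre1 E `&` Ui) = (\sum_(u : {ffun 'I_n -> bool})
    if u i then (cr * fine (mu B'))%:E else 0)%E.
  by rewrite (part_sum (measurableI _ _ m1 mUi)); apply: eq_bigr => u _; exact: T1.
rewrite count_half (fmu B' mB') !sumEFin -!EFinM; congr EFin.
by rewrite /= mulr_suml.
Qed.


Lemma GI : setI_closed G.
Proof.
move=> _ _ [B1 [D1 [B1' [mB1 [mD1 [mB1' ->]]]]]] [B2 [D2 [B2' [mB2 [mD2 [mB2' ->]]]]]].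
exists (fun k => B1 k `&` B2 k), (D1 `&` D2), (B1' `&` B2').
split; first by move=> k; exact: measurableI.
split; first exact: measurableI.
split; first exact: measurableI.
apply/seteqP; split=> p /=.
  by move=> [[h1 [h2 h3]] [h1' [h2' h3']]]; split => //; move=> k; split.
by move=> [h [[h2 h2'] [h3 h3']]]; split; split => //; move=> k; have [] := h k.
Qed.

Lemma GT : G setT.
Proof.
exists (fun=> setT), setT, setT; split => //; split => //; split => //.
by apply/seteqP; split=> p //=.
Qed.

Lemma PUi : P Ui = (2^-1)%:E.
Proof.
have [_ [_ h]] := base GT.
have e1 : pre1 setT `&` Ui = Ui by apply/seteqP; split=> w //= [].
have e2 : pre2 setT = setT by [].
by rewrite e1 e2 probability_setT mule1 in h.
Qed.

Lemma Dyn_dynkin : dynkin Dyn.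
Proof.
split; first exact: (base GT).
- move=> E [m1 [m2 h]]; split; first exact: measurableC.
  split; first exact: measurableC.
  have mUi : measurable Ui by exact: mU.
  have -> : pre1 (~` E) `&` Ui = Ui `\` pre1 E.
    by apply/seteqP; split=> w /= [].
  rewrite measureD //; last by rewrite ltey_eq fin_num_measure.
  change ((P Ui - P (Ui `&` pre1 E))%E = ((2^-1)%:E * (P \x mu)%E (~` pre2 E))%E).
  rewrite probability_setC // setIC h PUi.
  have fx : (P \x mu)%E (pre2 E) \is a fin_num.
    by rewrite ge0_fin_numE // (le_lt_trans (probability_le1 _ m2)) ?ltry.
  have key : forall b : \bar R, b \is a fin_num ->
      ((2^-1)%:E - (2^-1)%:E * b = (2^-1)%:E * (1 - b))%E.
    by move=> [r| |] //= _; rewrite -EFinD -EFinD -EFinM; congr EFin; ring.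
  exact: key.
- move=> F tF hF.
  have m1 k : measurable (pre1 (F k)) by have [] := hF k.
  have m2 k : measurable (pre2 (F k)) by have [_ []] := hF k.
  have mUi : measurable Ui by exact: mU.
  split.
    by change (measurable (\bigcup_k pre1 (F k))); apply: bigcup_measurable => k _.
  split.
    by change (measurable (\bigcup_k pre2 (F k))); apply: bigcup_measurable => k _.
  have -> : pre1 (\bigcup_k F k) `&` Ui = \bigcup_k (pre1 (F k) `&` Ui).
    by rewrite -setI_bigcupl.
  have -> : pre2 (\bigcup_k F k) = \bigcup_k (pre2 (F k)) by [].
  have t1 : trivIset setT (fun k => pre1 (F k) `&` Ui).
    move=> k m _ _ [w [[h1 _] [h2 _]]]; apply: (tF k m) => //.
    by exists (V w, Zt i false w).
  have t2 : trivIset setT (fun k => pre2 (F k)).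
    move=> k m _ _ [w [h1 h2]]; apply: (tF k m) => //.
    by exists (V w.1, w.2).
  rewrite measure_bigcup //; last by move=> k _; exact: measurableI.
  rewrite measure_bigcup //.
  rewrite -nneseriesZl //; apply: eq_eseriesr => k _.
  by have [_ []] := hF k.
Qed.

Lemma sG_Dyn : <<s G >> `<=` Dyn.
Proof.
rewrite -setI_closed_g_dynkin_g_sigma_algebra; last exact: GI.
apply: smallest_sub; first exact: Dyn_dynkin.
exact: base.
Qed.


Lemma pre_sigma (T1 T2 : Type) (g : T1 -> T2) (H : set (set T1))
  (G2 : set (set T2)) : sigma_algebra setT H ->
  (forall M, G2 M -> H (g @^-1` M)) -> forall M, <<s G2 >> M -> H (g @^-1` M).
Proof.
move=> [H0 HC HU] hG M; apply: (@smallest_sub _ _ _ [set M | H (g @^-1` M)]) => //.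
split.
- by rewrite /= preimage_set0.
- move=> B /= HB; have := HC _ HB.
  by congr H; apply/seteqP; split=> x /=.
- move=> F /= HF; have := HU _ HF.
  by congr H; apply/seteqP; split=> x /=.
Qed.

Lemma sG_fst (F : set (('I_n -> Z) * Xi)) :
  <<s @sample_seed_cylinders n _ _ Z Xi >> F -> <<s G >> [set p : S | F p.1].
Proof.
move=> hF.
apply: (@pre_sigma S _ fst (<<s G >>) (@sample_seed_cylinders n _ _ Z Xi) _ _ F hF).
  exact: smallest_sigma_algebra.
move=> M [[k [B [mB ->]]]|[D [mD ->]]]; apply: sub_sigma_algebra.
  exists (fun j => if j == k then B else setT), setT, setT.
  split; first by move=> j; case: ifP.
  split => //; split => //.
  apply/seteqP; split=> p /=.
    by move=> h; split => // j; case: eqP => // ->.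
  by move=> [h _]; have := h k; rewrite eqxx.
exists (fun=> setT), D, setT.
split => //; split => //; split => //.
apply/seteqP; split=> p /=; first by move=> h.
by move=> [_ []].
Qed.

Definition Tset : set S := [set p | loss01 f (A p.1.1 p.1.2) p.2].

Lemma sG_T : <<s G >> Tset.
Proof.
pose phi (p : S) : (Wt * Z)%type := (A p.1.1 p.1.2, p.2).
have -> : Tset = phi @^-1` [set p : (Wt * (X * Y))%type | loss01 f p.1 p.2] by [].
apply: (pre_sigma _ _ hloss); first exact: smallest_sigma_algebra.
move=> M [[S' mS' <-]|[B mB <-]].
  have := sG_fst (hA mS').
  by congr (<<s G >> _); apply/seteqP; split=> p /=; [move=> h|move=> [_ h]].
apply: sub_sigma_algebra.
exists (fun=> setT), setT, B.
split => //; split => //; split => //.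
apply/seteqP; split=> p /=; first by move=> [_ h].
by move=> [_ [_ h]].
Qed.


Lemma mloss (g : Omega -> Z) : measurable_fun setT g ->
  measurable [set w | loss01 f (W w) (g w)].
Proof.
move=> mg.
have mp : measurable_fun setT (fun w => (W w, g w)).
  by apply: measurable_fun_pair => //; exact: measurable_funP.
have := mp measurableT _ hloss.
by rewrite setTI.
Qed.

Definition Lint : \bar R :=
  (\int[P]_w (\int[mu]_z ((loss01 f (W w) z)%:R : R)%:E))%E.

Lemma integral_part : (P \x mu)%E (pre2 Tset) = Lint.
Proof.
rewrite /product_measure1 /Lint; apply: eq_integral => w _ /=.
set Lz := [set z | loss01 f (W w) z].
have mLz : measurable Lz.
  have := measurable_xsection (W w) hloss.
  by congr measurable; apply/seteqP; split=> z; rewrite /xsection /= in_setE.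
have -> : xsection (pre2 Tset) w = Lz.
  by apply/seteqP; split=> z; rewrite /xsection /Lz /= in_setE /pre2 /Tset /= hW.
rewrite -(setIT Lz) -integral_indic //; apply: eq_integral => z _.
rewrite indicE; case h: (loss01 f (W w) z).
  by rewrite mem_set.
rewrite memNset //; by rewrite /Lz /= h.
Qed.

Definition Lb (w : Omega) := loss01 f (W w) (Zt i false w).

Lemma pre1T : pre1 Tset = [set w | Lb w].
Proof. by apply/seteqP; split=> w; rewrite /pre1 /Tset /Lb /= hW. Qed.

Lemma setF (b : Omega -> bool) : [set w | b w = false] = ~` [set w | b w].
Proof. by apply/seteqP; split=> w /=; [move=> -> | move=> /negP/negbTE]. Qed.

Lemma mi_i : mutual_info_bool P Lb (U i) <= binary_entropy (fine Lint / 2).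
Proof.
have [m1 [m2 h]] := sG_Dyn sG_T.
rewrite pre1T integral_part in h.
rewrite pre1T in m1.
set Ls := [set w | Lb w] in h m1.
have mUi : measurable Ui by exact: mU.
have mUf : measurable [set w | U i w = false] by exact: mU.
have eUf : [set w | U i w = false] = ~` Ui by exact: setF.
have fLint : Lint \is a fin_num.
  rewrite -integral_part ge0_fin_numE //.
  by rewrite (le_lt_trans (probability_le1 _ m2)) ?ltry.
pose q := fine Lint / 2.
have hTT : P [set w | Lb w = true /\ U i w = true] = q%:E.
  rewrite [LHS](_ : _ = P (Ls `&` Ui)) // h -(fineK fLint) -EFinM.
  by congr EFin; rewrite /q mulrC.
have hTF : P [set w | Lb w = true /\ U i w = false] = 0%E.
  have mI : measurable [set w | loss01 f (W w) (Zt i (U i w) w)].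
    have -> : [set w | loss01 f (W w) (Zt i (U i w) w)] =
      ([set w | U i w = false] `&` [set w | loss01 f (W w) (Zt i false w)]) `|`
      ([set w | U i w = true] `&` [set w | loss01 f (W w) (Zt i true w)]).
      apply/seteqP; split=> w /=.
        by case: (U i w) => h1; [right|left].
      by move=> [[-> h1]|[-> h1]].
    apply: measurableU; apply: measurableI; (exact: mU || apply: mloss; exact: measurable_funP).
  apply: (subset_measure0 _ mI) => //; first exact: measurableI.
    by move=> w /= [h1 h2]; rewrite h2.
  exact: hinterp.
have hUt : P [set w | U i w = true] = (2^-1)%:E by exact: PUi.
have hUf : P [set w | U i w = false] = (2^-1)%:E.
  by rewrite eUf probability_setC // PUi -EFinB; congr EFin; lra.
have hFT : P [set w | Lb w = false /\ U i w = true] = (2^-1 - q)%:E.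
  have eFT : [set w | Lb w = false /\ U i w = true] = Ui `\` Ls.
    apply/seteqP; split=> w; rewrite /Ls /Ui /=.
      by move=> [h1 h2]; split => //; rewrite h1.
    by move=> [h1 /negP/negbTE h2].
  rewrite [LHS](_ : _ = P (Ui `\` Ls)); last by rewrite -eFT.
  rewrite measureD //; last by rewrite ltey_eq fin_num_measure.
  change ((P Ui - P (Ui `&` Ls))%E = (2^-1 - q)%:E).
  rewrite setIC.
  have := hTT; rewrite [X in X = _ -> _](_ : _ = P (Ls `&` Ui)) // => ->.
  by rewrite PUi -EFinB.
have hFF : P [set w | Lb w = false /\ U i w = false] = (2^-1)%:E.
  have eFF : [set w | Lb w = false /\ U i w = false] =
      [set w | U i w = false] `\` [set w | Lb w = true /\ U i w = false].
    apply/seteqP; split=> w /=; first by move=> [-> ->]; split => // -[].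
    by move=> [-> /not_andP [/negP/negbTE ->|]] //.
  rewrite [LHS](_ : _ = P ([set w | U i w = false] `\` [set w | Lb w = true /\ U i w = false])); last by rewrite -eFF.
  rewrite measureD //; last by rewrite ltey_eq fin_num_measure.
    change ((P [set w | U i w = false] - P ([set w | U i w = false] `&` [set w | Lb w = true /\ U i w = false]))%E = (2^-1)%:E).
    rewrite setIC (_ : _ `&` _ = [set w | Lb w = true /\ U i w = false]).
      by rewrite hTF hUf sube0.
    by apply/seteqP; split=> w /=; [case|move=> [h1 h2]].
  exact: measurableI.
have hLt : P [set w | Lb w = true] = q%:E.
  have eLt : [set w | Lb w = true] = [set w | Lb w = true /\ U i w = true] `|`
                                    [set w | Lb w = true /\ U i w = false].
    apply/seteqP; split=> w /=; last by case=> -[].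
    by case: (U i w) => h1; [left|right].
  rewrite [LHS](_ : _ = P ([set w | Lb w = true /\ U i w = true] `|`
                                    [set w | Lb w = true /\ U i w = false])); last by rewrite -eLt.
  rewrite measureU //; first by transitivity (q%:E + 0%E)%E; [congr (_ + _)%E; [exact: hTT|exact: hTF] | rewrite adde0].
  - exact: measurableI.
  - exact: measurableI.
  - by apply/seteqP; split=> w //= [[_ ->] [_]].
have hLf : P [set w | Lb w = false] = (1 - q)%:E.
  rewrite setF probability_setC //.
  change ((1 - P [set w | Lb w = true])%E = (1 - q)%:E).
  by rewrite hLt -EFinB.
have q0 : 0 <= q.
  by rewrite /q divr_ge0 // fine_ge0 // -integral_part measure_ge0.
have qh : q <= 2^-1.
  have : (q%:E <= (2^-1)%:E)%E.
    rewrite -hTT -PUi; apply: le_measure; rewrite ?inE; [exact: (measurableI _ _ m1 mUi)| exact: mUi | by move=> w []].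
  by rewrite lee_fin.
rewrite /mutual_info_bool.
apply: (@mi_table_bound R q (fun a b => fine (P [set w | Lb w = a /\ U i w = b]))
   (fun a => fine (P [set w | Lb w = a])) (fun b => fine (P [set w | U i w = b]))).
- by rewrite q0 qh.
- by rewrite hTT.
- by rewrite hTF.
- by rewrite hFT.
- by rewrite hFF.
- by rewrite hLt.
- by rewrite hLf.
- by rewrite hUt.
- by rewrite hUf.
Qed.

End Main.

Unset Implicit Arguments.

Theorem theorem7
  (R : realType)
  (* underlying probability space carrying all the randomness *)
  (dO : measure_display) (Omega : measurableType dO) (P : probability Omega R)
  (* Z = X x Y, hypothesis space W, seed space Xi of the randomized algorithm *)
  (dX dY dW dXi : measure_display)
  (X : measurableType dX) (Y : measurableType dY)
  (Wt : measurableType dW) (Xi : measurableType dXi)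
  (mu : probability (X * Y)%type R)
  (f : Wt -> X -> Y)
  (hloss : measurable [set p : (Wt * (X * Y))%type | loss01 f p.1 p.2])
  (n : nat) (n_gt0 : (0 < n)%N)
  (* randomized learning algorithm: W = A(training sample, independent seed) *)
  (A : ('I_n -> (X * Y)%type) -> Xi -> Wt)
  (hA : algo_measurable A)
  (* supersample, selection variables, seed and output hypothesis *)
  (Zt : 'I_n -> bool -> {RV P >-> (X * Y)%type})
  (U : 'I_n -> {RV P >-> bool})
  (xi : {RV P >-> Xi})
  (W : {RV P >-> Wt})
  (* the Zt i j are i.i.d. with law mu, the U i are i.i.d. uniform on {0,1},
     and all of these are mutually independent and independent of the seed *)
  (hlaw : forall (B : 'I_n -> bool -> set (X * Y)%type) (C : 'I_n -> set bool)
            (D : set Xi),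
      (forall i j, measurable (B i j)) -> (forall i, measurable (C i)) ->
      measurable D ->
      P [set w | (forall i j, B i j (Zt i j w)) /\ (forall i, C i (U i w))
                 /\ D (xi w)]
      = ((\prod_(i < n) \prod_(j : bool) mu (B i j))
         * (\prod_(i < n) unif_bool R (C i)) * P (xi @^-1` D))%E)
  (hW : forall w, W w = A (fun i => Zt i (U i w) w) (xi w))
  (* interpolation: zero training loss almost surely at every index *)
  (hinterp : forall i : 'I_n,
      P [set w | loss01 f (W w) (Zt i (U i w) w)] = 0%E) :
  let Lmu : R :=
    fine (\int[P]_w (\int[mu]_z ((loss01 f (W w) z)%:R : R)%:E))%E in
  n%:R^-1 * \sum_(i < n)
      mutual_info_bool P (fun w => loss01 f (W w) (Zt i false w)) (U i)
  <= binary_entropy (Lmu / 2).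
Proof.
cbv zeta.
set Lmu := fine _.
have H : forall i : 'I_n,
    mutual_info_bool P (fun w => loss01 f (W w) (Zt i false w)) (U i)
    <= binary_entropy (Lmu / 2).
  by move=> i; exact: (mi_i hloss hA hlaw hW hinterp i).
have n0 : (n%:R : R) != 0 by rewrite pnatr_eq0 -lt0n.
apply: (le_trans (y := n%:R^-1 * \sum_(i < n) binary_entropy (Lmu / 2))).
  apply: ler_wpM2l; first by rewrite invr_ge0 ler0n.
  by apply: ler_sum => i _; exact: H.
have key : forall x : R, n%:R^-1 * (x *+ n) = x.
  by move=> x; rewrite -mulr_natl; field.
by rewrite big_const_ord iter_addr_0 key.
Qed.
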